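(* Let $F,S_0,S_1,\ldots,S_m$ be formulas. If $\emptyset[F,S_1,\ldots,S_m]=\emptyset[S_1,\ldots,S_m]$, then $\emptyset[F,S_0,S_1,\ldots,S_m]=\emptyset[S_0,S_1,\ldots,S_m]$.
   Context: Propositional models are truth assignments over a finite set of variables; a formula used where a set of models is expected stands for its set of models. A doxastic state is a sequence $[C(0),\ldots,C(k)]$ of nonempty, pairwise disjoint sets of models covering all models. The flat doxastic state $\emptyset$ is $[\text{all models}]$. Lexicographic revision: $C\,\mathrm{lex}(A) = [C(0)\cap A,\ldots,C(k)\cap A, C(0)\setminus A,\ldots,C(k)\setminus A]$, empty sets discarded. $\emptyset[T_1,\ldots,T_n]$ denotes $\emptyset$ revised lexicographically by $T_1$, then $T_2$, ..., then $T_n$. *)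

(* Defs.v *)
From mathcomp Require Import all_boot.
Set Implicit Arguments. Unset Strict Implicit. Unset Printing Implicit Defensive.

Inductive form (n : nat) : Type :=
| FVar of 'I_n
| FTrue
| FFalse
| FNot of form n
| FAnd of form n & form n
| FOr of form n & form n
| FImp of form n & form n.

Definition model (n : nat) := {ffun 'I_n -> bool}.

Fixpoint eval n (v : model n) (f : form n) : bool :=
  match f with
  | FVar i => v i
  | FTrue => true
  | FFalse => false
  | FNot g => ~~ eval v g
  | FAnd g h => eval v g && eval v h
  | FOr g h => eval v g || eval v h
  | FImp g h => eval v g ==> eval v h
  end.

Definition mods n (f : form n) : {set model n} := [set v | eval v f].

(* A doxastic state: sequence of nonempty, pairwise disjoint sets of models
   covering all models (ordered from most to least plausible). *)
Definition dstate n := seq {set model n}.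

Definition is_dstate n (C : dstate n) : Prop :=
  all (fun X => X != set0) C /\
  (forall i j, i < size C -> j < size C -> i != j ->
     [disjoint nth set0 C i & nth set0 C j]) /\
  (forall v : model n, exists2 X, X \in C & v \in X).

Definition flat n : dstate n := [:: [set: model n]].

Definition lex n (C : dstate n) (A : {set model n}) : dstate n :=
  [seq X <- [seq X :&: A | X <- C] ++ [seq X :\: A | X <- C] | X != set0].

Definition revise n (C : dstate n) (Ts : seq (form n)) : dstate n :=
  foldl (fun D T => lex D (mods T)) C Ts.

Definition flat_rev n (Ts : seq (form n)) : dstate n := revise (flat n) Ts.

(* Main.v *)
Require Import Defs.
From mathcomp Require Import all_boot.

Set Implicit Arguments. Unset Strict Implicit. Unset Printing Implicit Defensive.

Section Aux.
Variable n : nat.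
Notation S := {set model n}.

Definition P (C D : seq S) : seq S :=
  flatten [seq [seq K :&: X | X <- C] | K <- D].
Definition nrm (s : seq S) : seq S := [seq X <- s | X != set0].
Definition L (T : form n) : seq S := [:: mods T; ~: mods T].
Definition g (D : seq S) (T : form n) := P D (L T).
Definition sig (Ts : seq (form n)) := foldl g [:: setT] Ts.

Lemma P_cat C D1 D2 : P C (D1 ++ D2) = P C D1 ++ P C D2.
Proof. by rewrite /P map_cat flatten_cat. Qed.

Lemma P_cons C K D : P C (K :: D) = [seq K :&: X | X <- C] ++ P C D.
Proof. by []. Qed.

Lemma P_map C D K : P C [seq K :&: Y | Y <- D] = [seq K :&: Z | Z <- P C D].
Proof.
elim: D => [|Y D IH] //=.
rewrite {1}/P /= -/(P C [seq K :&: Y0 | Y0 <- D]) IH /P /= map_cat -map_comp.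
by congr (_ ++ _); apply: eq_map => X /=; rewrite setIA.
Qed.

Lemma P_assoc C D E : P C (P D E) = P (P C D) E.
Proof.
elim: E => [|K E IH] //.
have e : P D (K :: E) = [seq K :&: Y | Y <- D] ++ P D E by [].
by rewrite e P_cat IH P_map.
Qed.

Lemma P_T D : P [:: setT] D = D.
Proof. by elim: D => [|K D IH] //=; rewrite P_cons IH /= setIT. Qed.

Lemma P_Tr C : P C [:: setT] = C.
Proof.
rewrite /P /= cats0 -{2}(map_id C); apply: eq_map => X; exact: setTI.
Qed.

Lemma sig_fold C Ss : foldl g C Ss = P C (sig Ss).
Proof.
elim/last_ind: Ss => [|Ss T IH]; first by rewrite /sig /= P_Tr.
by rewrite /sig !foldl_rcons -/(sig Ss) IH /g P_assoc.
Qed.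

Lemma nrm_P_nrm C D : nrm (P (nrm C) D) = nrm (P C D).
Proof.
elim: D => [|K D IH] //.
rewrite /P /= -!/(P _ D) /nrm !filter_cat -!/(nrm _) IH; congr (_ ++ _).
clear IH; elim: C => [|X C IHC] //=.
case: eqP => [->|_] /=; last by rewrite IHC.
by rewrite setI0 eqxx IHC.
Qed.

Lemma setT_neq0 : [set: model n] != set0.
Proof. by apply/set0Pn; exists [ffun=> false]. Qed.

Lemma lex_P D A : lex D A = nrm (P D [:: A; ~: A]).
Proof.
rewrite /lex /nrm /P /= cats0; congr filter; congr (_ ++ _);
  apply: eq_map => X; by rewrite ?setDE setIC.
Qed.

Lemma flat_rev_sig Ts : flat_rev Ts = nrm (sig Ts).
Proof.
elim/last_ind: Ts => [|Ts T IH].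
  by rewrite /flat_rev /sig /= /nrm /= setT_neq0.
rewrite /flat_rev /revise foldl_rcons -/(revise _ _) -/(flat_rev _) IH.
by rewrite lex_P nrm_P_nrm /sig foldl_rcons.
Qed.

Lemma sig_cons T Ss : sig (T :: Ss) = P (L T) (sig Ss).
Proof. by rewrite /sig /= -/(foldl g _ Ss) sig_fold /g P_T. Qed.

Lemma le_split (K A : S) :
  (K != set0) <= (K :&: A != set0) + (K :&: ~: A != set0).
Proof.
case: (K :&: A =P set0) => [h1|]; case: (K :&: ~: A =P set0) => [h2|] //=.
  by rewrite -(setID K A) setDE h1 h2 setU0 eqxx.
all: by case: (K != set0).
Qed.

Lemma countP_ge (A : S) R :
  count (fun X => X != set0) R <= count (fun X => X != set0) (P [:: A; ~: A] R).
Proof.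
elim: R => [|K R IH] //.
rewrite P_cons /= addnA.
exact: leq_add (le_split K A) IH.
Qed.

Lemma key (A : S) R :
  count (fun X => X != set0) (P [:: A; ~: A] R) = count (fun X => X != set0) R ->
  forall K, K \in R -> K :&: A = set0 \/ K :&: ~: A = set0.
Proof.
elim: R => [|K R IH] // h K'.
move: h; rewrite P_cons /= addnA => h.
have h1 := le_split K A.
have h2 := countP_ge A R.
have e1 : ((K :&: A != set0) + (K :&: ~: A != set0) = (K != set0))%N.
  apply/eqP; rewrite eqn_leq h1 andbT.
  by rewrite -(leq_add2r (count (fun X => X != set0) (P [:: A; ~: A] R))) h leq_add2l.
have e2 : count (fun X => X != set0) (P [:: A; ~: A] R) = count (fun X => X != set0) R.
  by move: h; rewrite e1; move/addnI.
rewrite inE => /orP [/eqP ->|]; last exact: IH.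
move: e1; case: eqP => [-> | _]; first by left.
case: eqP => [-> | _]; first by right.
by case: (K != set0).
Qed.

Lemma block (K A B : S) : K :&: A = set0 \/ K :&: ~: A = set0 ->
  nrm [seq K :&: Z | Z <- P [:: A; ~: A] [:: B; ~: B]] =
  nrm [seq K :&: Z | Z <- [:: B; ~: B]].
Proof.
have hID := setID K A; rewrite setDE in hID.
case=> h; rewrite /P /= !(setICA K) h; move: hID; rewrite h ?set0U ?setU0 => ->;
  by rewrite !setI0 eqxx /nrm /= ?(setIC B) ?(setIC (~: B)).
Qed.

Lemma nrm_P_eq C1 C2 R :
  (forall K, K \in R -> nrm [seq K :&: X | X <- C1] = nrm [seq K :&: X | X <- C2]) ->
  nrm (P C1 R) = nrm (P C2 R).
Proof.
elim: R => [|K R IH] // h.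
rewrite !P_cons /nrm !filter_cat -!/(nrm _) h ?mem_head // IH // => K' hK'.
by apply: h; rewrite inE hK' orbT.
Qed.

End Aux.

Theorem mainTheorem9 (n : nat) (F S0 : form n) (Ss : seq (form n)) :
  flat_rev (F :: Ss) = flat_rev Ss ->
  flat_rev (F :: S0 :: Ss) = flat_rev (S0 :: Ss).
Proof.
rewrite !flat_rev_sig !sig_cons P_assoc => h.
have hc : count (fun X => X != set0) (P (L F) (sig Ss)) =
          count (fun X => X != set0) (sig Ss).
  by rewrite -!size_filter; move: h; rewrite /nrm => ->.
have hk := key hc.
apply: nrm_P_eq => K hK.
exact: block (hk K hK).
Qed.
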